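(* Let $p\in(0,1)$, $q=1-p$, $\lambda=p/q$, $\alpha\in(0,1)$. Let $J^B_0,J^B_1,\dots$ be i.i.d. with the discrete Mittag--Leffler distribution of type B, i.e. $J^B\overset{d}{=}1+\sum_{k=1}^{M-1}Z_k$ with $M$ geometric, $P(M=k)=pq^{k-1}$, independent of i.i.d. Sibuya$(\alpha)$ variables $Z_k$ ($P(Z=k)=(-1)^{k-1}\binom{\alpha}{k}$, $k\in\mathbb{N}$); equivalently $\mathbb{E}u^{J^B}=\dfrac{u}{1+\frac{q}{p}(1-u)^\alpha}$. Let $N_B(t)=\max\{n\in\mathbb{N}_0:J^B_0+\dots+J^B_{n-1}\le t\}$, $t\in\mathbb{N}_0$, and $p_k(t)=P(N_B(t)=k)$, with $p_k(t)=0$ for $t<0$. Then, with initial condition $p_k(0)=\delta_{0k}$, the state probabilities solve for $t\in\mathbb{N}_0$: $$(I-\mathcal{B})^\alpha p_k(t)=-\lambda p_k(t)+\lambda p_{k-1}(t-1),\quad k\ge1,$$ $$(I-\mathcal{B})^\alpha p_0(t)-(-1)^t\binom{\alpha-1}{t}=-\lambda p_0(t)+\lambda\delta_{0t}.$$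
   Context: $\mathcal{B}$ is the backward shift in time, $\mathcal{B}p(t)=p(t-1)$, and $(I-\mathcal{B})^\alpha p(t)=\sum_{k=0}^\infty\binom{\alpha}{k}(-1)^kp(t-k)$ is the fractional power of the discrete derivative. $\binom{x}{k}=x(x-1)\cdots(x-k+1)/k!$; $\delta$ is the Kronecker delta. *)

(* Defs.v *)
From HB Require Import structures.
From mathcomp Require Import all_boot all_order all_algebra.
From mathcomp Require Import all_classical all_reals all_analysis.
Set Implicit Arguments. Unset Strict Implicit. Unset Printing Implicit Defensive.
Import Order.TTheory GRing.Theory Num.Theory.
Import numFieldNormedType.Exports.
Local Open Scope classical_set_scope.
Local Open Scope ring_scope.

Section Defs.
Variable R : realType.

Definition gbinom (x : R) (k : nat) : R :=
  (\prod_(i < k) (x - i%:R)) / (k`!)%:R.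

(* fractional power of the discrete derivative, applied to f : int -> R at t:
   (I - B)^a f(t) = sum_{k>=0} binom(a,k) (-1)^k f(t-k)  (infinite series) *)
Definition fracdiff (a : R) (f : int -> R) (t : int) : R :=
  limn (series (fun k : nat => gbinom a k * (-1) ^+ k * f (t - k%:Z))).

Definition sibuya (a : R) (k : nat) : R :=
  if k is 0 then 0 else (-1) ^+ k.-1 * gbinom a k.

Definition dconv (f g : nat -> R) (n : nat) : R :=
  \sum_(i < n.+1) f i * g (n - i)%N.

Fixpoint dconv_pow (f : nat -> R) (m : nat) : nat -> R :=
  match m with
  | 0 => fun n => if n == 0%N then 1 else 0
  | m'.+1 => dconv f (dconv_pow f m')
  end.

(* pmf of the discrete Mittag-Leffler distribution of type B:
   J = 1 + Z_1 + ... + Z_{M-1},  P(M = m) = p q^(m-1), m >= 1,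
   M independent of the iid Sibuya(a) Z_k; hence
   P(J = n) = sum_{m>=1} p q^(m-1) P(Z_1+...+Z_{m-1} = n-1). *)
Definition mlB_pmf (p a : R) (n : nat) : R :=
  if n is n'.+1 then
    limn (series (fun j : nat => p * (1 - p) ^+ j * dconv_pow (sibuya a) j n'))
  else 0.

End Defs.

Definition iid_indep {d : measure_display} {T : measurableType d} {R : realType}
  (P : probability T R) (J : nat -> T -> nat) : Prop :=
  forall (s : seq nat) (v : nat -> nat), uniq s ->
    P (\bigcap_(i in [set` s]) [set w | J i w = v i]) =
    (\prod_(i <- s) P [set w | J i w = v i])%E.

Definition psum (T : Type) (J : nat -> T -> nat) (n : nat) (w : T) : nat :=
  \sum_(i < n) J i w.

(* state probabilities p_k(t) = P(N(t) = k), with N(t) = max{n : S_n <= t};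
   since S is nondecreasing, {N(t) = k} = {S_k <= t < S_{k+1}};
   p_k(t) = 0 for t < 0 *)
Definition stateprob {d : measure_display} {T : measurableType d} {R : realType}
  (P : probability T R) (J : nat -> T -> nat) (k : nat) (t : int) : R :=
  match t with
  | Posz t' => fine (P [set w | (psum J k w <= t')%N /\ (t' < psum J k.+1 w)%N])
  | Negz _ => 0
  end.

(* Main.v *)
Require Import Defs.
From HB Require Import structures.
From mathcomp Require Import all_boot all_order all_algebra.
From mathcomp Require Import all_classical all_reals all_analysis.
From mathcomp Require Import zify ring lra.
Import Order.TTheory GRing.Theory Num.Theory.
Import numFieldNormedType.Exports.
Local Open Scope classical_set_scope.
Local Open Scope ring_scope.
Set Implicit Arguments. Unset Strict Implicit.

Section Alg.
Variable R : realType.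

Definition tr N (g : nat -> R) : {poly R} := \poly_(i < N) g i.
Definition eqN N (p q : {poly R}) := forall i, (i < N)%N -> p`_i = q`_i.

Lemma eqN_refl N p : eqN N p p. Proof. by []. Qed.
Lemma eqN_sym N p q : eqN N p q -> eqN N q p.
Proof. by move=> H i iN; rewrite H. Qed.
Lemma eqN_trans N p q r : eqN N p q -> eqN N q r -> eqN N p r.
Proof. by move=> H1 H2 i iN; rewrite H1 ?H2. Qed.
Lemma eqN_eq N p q : p = q -> eqN N p q. Proof. by move=> ->. Qed.
Lemma eqN_add N p p' q q' : eqN N p p' -> eqN N q q' -> eqN N (p + q) (p' + q').
Proof. by move=> H1 H2 i iN; rewrite !coefD H1 ?H2. Qed.
Lemma eqN_sub N p p' q q' : eqN N p p' -> eqN N q q' -> eqN N (p - q) (p' - q').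
Proof. by move=> H1 H2 i iN; rewrite !coefB H1 ?H2. Qed.
Lemma eqN_mul N p p' q q' : eqN N p p' -> eqN N q q' -> eqN N (p * q) (p' * q').
Proof.
move=> H1 H2 i iN; rewrite !coefM; apply: eq_bigr => j _.
have ji : (j <= i)%N by rewrite -ltnS ltn_ord.
rewrite H1 ?H2 //; first by apply: leq_ltn_trans iN; apply: leq_subr.
by apply: leq_ltn_trans iN.
Qed.
Lemma eqN_exp N p q n : eqN N p q -> eqN N (p ^+ n) (q ^+ n).
Proof.
move=> H; elim: n => [|n IH]; first exact: eqN_refl.
by rewrite !exprS; apply: eqN_mul.
Qed.

Lemma coef_tr N g i : (i < N)%N -> (tr N g)`_i = g i.
Proof. by move=> iN; rewrite /tr coef_poly iN. Qed.

Lemma eqN_dconv N g h : eqN N (tr N (dconv g h)) (tr N g * tr N h).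
Proof.
move=> i iN; rewrite coef_tr // coefM /dconv; apply: eq_bigr => j _.
have ji : (j <= i)%N by rewrite -ltnS ltn_ord.
rewrite !coef_tr //; first by apply: leq_ltn_trans iN; apply: leq_subr.
by apply: leq_ltn_trans iN.
Qed.

Lemma sum_ind n s : \sum_(j < n) ((j : nat) == s)%:R = (s < n)%:R :> R.
Proof.
case: (ltnP s n) => H.
  rewrite (bigD1 (Ordinal H)) //= eqxx big1 ?addr0 // => j /eqP Hj.
  case: eqP => // E; exfalso; apply: Hj; exact: val_inj.
rewrite big1 // => j _; case: eqP => // E.
by move: (ltn_ord j); rewrite E ltnNge H.
Qed.

Definition Wf (f : nat -> R) k N t : R :=
  \sum_(v : {ffun 'I_k -> 'I_N} | (\sum_(i < k) (v i : nat) <= t)%N)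
      \prod_(i < k) f (v i).

Definition U N := tr N (fun _ => 1).

Lemma W_coef f k N t : (t < N)%N -> Wf f k N t = (U N * (tr N f) ^+ k)`_t.
Proof.
move=> tN; rewrite mulrC coefM.
rewrite (eq_bigr (fun j : 'I_t.+1 => ((tr N f) ^+ k)`_j)); last first.
  move=> j _; rewrite coef_tr ?mulr1 //; apply: leq_ltn_trans tN; exact: leq_subr.
have PE : forall x : {poly R}, x ^+ k = \prod_(i < k) x.
  by move=> x; rewrite prodr_const card_ord.
rewrite PE /tr poly_def bigA_distr_bigA /=.
have E : forall v : {ffun 'I_k -> 'I_N},
   \prod_(i < k) (f (v i) *: 'X^(v i)) =
   (\prod_(i < k) f (v i)) *: 'X^(\sum_(i < k) (v i : nat)).
  move=> v; rewrite -mul_polyC rmorph_prod -prodrXr -big_split /=.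
  by apply: eq_bigr => i _; rewrite mul_polyC.
rewrite (eq_bigr (fun j : 'I_t.+1 => \sum_(v : {ffun 'I_k -> 'I_N})
   (\prod_(i < k) f (v i)) * ((j : nat) == \sum_(i < k) (v i : nat))%:R)); last first.
  move=> j _; rewrite coef_sum; apply: eq_bigr => v _.
  by rewrite E coefZ coefXn.
rewrite exchange_big /= /Wf big_mkcond /=; apply: eq_bigr => v _.
rewrite -mulr_sumr sum_ind ltnS.
by case: ifP => _; rewrite ?mulr1 ?mulr0.
Qed.


Lemma sum_trunc (u : nat -> R) K m : (K <= m)%N ->
  (forall j, (K <= j)%N -> u j = 0) -> \sum_(j < m) u j = \sum_(j < K) u j.
Proof.
move=> Km H; rewrite (big_ord_widen m u Km) [RHS]big_mkcond /=.
apply: eq_bigr => j _; case: ifP => // /negbT; rewrite -leqNgt => /H ->.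
by [].
Qed.

Lemma limn_trunc (u : nat -> R) K : (forall j, (K <= j)%N -> u j = 0) ->
  limn (series u) = \sum_(j < K) u j.
Proof.
move=> H; apply: lim_near_cst => //; exists K => // m /= Km.
by rewrite /series /= big_mkord (sum_trunc Km H).
Qed.

Variables (p a : R).
Hypothesis hp : 0 < p < 1.

Local Notation sib := (sibuya a).
Local Notation D j := (dconv_pow (sibuya a) j).
Local Notation f := (mlB_pmf p a).

Lemma D_zero j n : (n < j)%N -> D j n = 0.
Proof.
elim: j n => [//|j IH] n nj.
have -> : D j.+1 n = dconv sib (D j) n by [].
rewrite /dconv big1 // => i _.
case: i => [[|i]] /= Hi; first by rewrite /sibuya mul0r.
rewrite IH ?mulr0 //; rewrite ltnS in nj; rewrite ltnS in Hi.

lia.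
Qed.

Lemma f_sum n M : (n < M)%N -> f n.+1 = \sum_(j < M) p * (1 - p) ^+ j * D j n.
Proof.
move=> nM; rewrite /mlB_pmf (limn_trunc (K := n.+1)); last first.
  by move=> j nj; rewrite (D_zero nj) mulr0.
by rewrite (sum_trunc (u := fun j => p * (1 - p) ^+ j * D j n) nM) // => j nj; rewrite D_zero ?mulr0.
Qed.

Definition aa (j : nat) : R := gbinom a j * (-1) ^+ j.
Definition Apol N := tr N aa.
Definition Spol N := tr N sib.

Lemma gbinom0 (x : R) : gbinom x 0 = 1.
Proof. by rewrite /gbinom big_ord0 fact0 divr1. Qed.

Lemma eqN_D N j : eqN N (tr N (D j)) (Spol N ^+ j).
Proof.
elim: j => [|j IH].
  move=> i iN; rewrite coef_tr // expr0 coef1 /=; by case: (i == 0%N).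
move=> i iN; rewrite (eqN_dconv _ _ iN) exprS.
exact: (eqN_mul (@eqN_refl N _) IH).
Qed.

Lemma eqN_S N : eqN N (Spol N) (1 - Apol N).
Proof.
move=> i iN; rewrite coefB coef1 /Spol /Apol !coef_tr // /aa /sibuya.
case: i iN => [|m] _ /=; first by rewrite gbinom0 expr0 mulr1 subrr.
by rewrite exprS mulN1r mulrN sub0r opprK mulrC.
Qed.

Lemma S_nil N : eqN N (Spol N ^+ N) 0.
Proof.
case: N => [//|N].
have T0 : take_poly 1 (Spol N.+1) = 0.
  apply/polyP => i; rewrite coef_take_poly coef0; case: i => [|i] //=.
  by rewrite /Spol coef_tr // /sibuya.
have := poly_take_drop 1 (Spol N.+1); rewrite T0 add0r expr1 => <-.
by move=> i iN; rewrite exprMn coefMXn iN coef0.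
Qed.

Definition Gpol N : {poly R} := p%:P * \sum_(j < N) ((1 - p)%:P * Spol N) ^+ j.

Lemma eqN_F N : eqN N (tr N f) ('X * Gpol N).
Proof.
move=> i iN; rewrite coef_tr // coefXM; case: i iN => [|n] nN //.
rewrite (f_sum (M := N)) //; last exact: ltnW.
rewrite /Gpol coefCM coef_sum mulr_sumr; apply: eq_bigr => j _.
rewrite exprMn -rmorphXn /= coefCM -(eqN_D (N := N)); last exact: ltnW.
by rewrite coef_tr ?mulrA //; exact: ltnW.
Qed.

Local Notation q := (1 - p).
Local Notation lam := (p / (1 - p)).

Lemma q_neq0 : q != 0.
Proof. by rewrite subr_eq0 eq_sym; case/andP: hp => _ /lt_eqF ->. Qed.

Lemma key N : eqN N ((Apol N + lam%:P) * tr N f) (lam%:P * 'X).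
Proof.
have geo : forall y : {poly R}, (1 - y) * \sum_(j < N) y ^+ j = 1 - y ^+ N.
  by move=> y; rewrite -[1 - y ^+ N]opprB subrX1 -mulNr opprB.
have E1a : eqN N ((1 - q%:P * Spol N) * Gpol N) p%:P.
  rewrite /Gpol mulrCA geo => i iN.
  have hC : (q%:P) ^+ N = (q ^+ N)%:P by rewrite rmorphXn.
  by rewrite mulrBr mulr1 coefB coefCM exprMn hC coefCM S_nil // coef0 !mulr0 subr0.
have E1 : eqN N ((p%:P + q%:P * Apol N) * Gpol N) p%:P.
  have E : eqN N (p%:P + q%:P * Apol N) (1 - q%:P * Spol N).
    move=> j jN; rewrite coefB coefD !coefCM (eqN_S jN) coefB coef1 coefC.
    by case: (j == 0%N) => /=; rewrite ?mulr1n ?mulr0n; ring.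
  move=> i iN; rewrite -E1a //; exact: (eqN_mul E (@eqN_refl N _)).
have H1 : eqN N ((Apol N + lam%:P) * tr N f) ((Apol N + lam%:P) * ('X * Gpol N)).
  by apply: eqN_mul => //; exact: eqN_F.
have EQ : (Apol N + lam%:P) * ('X * Gpol N) =
   (q^-1)%:P * 'X * ((p%:P + q%:P * Apol N) * Gpol N).
  have h1 : lam%:P = (q^-1)%:P * p%:P by rewrite -polyCM mulrC.
  have h2 : Apol N = (q^-1)%:P * q%:P * Apol N.
    by rewrite -polyCM mulVf ?q_neq0 // mul1r.
  by rewrite h1 {1}h2; ring.
move=> i iN; rewrite H1 // EQ -mulrA !coefCM coefXM coefX.
case: i iN => [|i] iN /=; first by rewrite !mulr0.
rewrite E1; last by apply: ltnW.
rewrite coefC; case: i {iN} => [|i] /=; last by rewrite !mulr0.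
by rewrite mulr1 mulrC.
Qed.


Lemma gbinomS (x : R) n : gbinom x n.+1 = gbinom x n * (x - n%:R) / n.+1%:R.
Proof.
rewrite /gbinom big_ord_recr factS natrM /=.
have h1 : (n`!)%:R != 0 :> R by rewrite pnatr_eq0 -lt0n fact_gt0.
have h2 : (n.+1)%:R != 0 :> R by rewrite pnatr_eq0.
by field; rewrite h1 andbT addrC natr1 pnatr_eq0.
Qed.

Lemma gbinom_shift (x : R) n : gbinom x n * (x - n%:R) = x * gbinom (x - 1) n.
Proof.
rewrite /gbinom mulrAC [x * _]mulrA; congr (_ / _).
have -> : \prod_(i < n) (x - i%:R) * (x - n%:R) = \prod_(i < n.+1) (x - i%:R).
  by rewrite big_ord_recr.
rewrite big_ord_recl /= subr0.
congr (_ * _); apply: eq_bigr => i _; rewrite /bump /= add1n -addn1 natrD.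
by rewrite opprD addrA addrAC.
Qed.

Lemma pascal (x : R) n : gbinom x n.+1 = gbinom (x - 1) n.+1 + gbinom (x - 1) n.
Proof.
rewrite !gbinomS gbinom_shift.
have h2 : (n.+1)%:R != 0 :> R by rewrite pnatr_eq0.
rewrite -addn1 natrD; field.
by rewrite natr1 pnatr_eq0.
Qed.

Lemma sum_aa n : \sum_(j < n.+1) aa j = (-1) ^+ n * gbinom (a - 1) n.
Proof.
elim: n => [|n IH]; first by rewrite big_ord_recr big_ord0 /aa /= !gbinom0 add0r expr0.
rewrite big_ord_recr /= IH /aa pascal exprS; ring.
Qed.

Lemma eqN_UX N : eqN N (U N * (1 - 'X)) 1.
Proof.
move=> i iN; rewrite mulrBr mulr1 coefB coefMX coef1 /U coef_tr //.
case: i iN => [|i] iN //=; first by rewrite subr0.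
by rewrite coef_tr ?subrr //; apply: ltnW.
Qed.

Lemma coef0X (r : {poly R}) k : (r ^+ k)`_0 = r`_0 ^+ k.
Proof. by elim: k => [|k IH]; rewrite ?expr0 ?coef1 // !exprS coef0M IH. Qed.

End Alg.
Arguments eqN {R}. Arguments tr {R}. Arguments U {R}. Arguments Wf {R}. Arguments Apol {R}. Arguments aa {R}.

Section ProbPart.
Variables (R : realType) (d : measure_display) (T : measurableType d).
Variables (P : probability T R) (J : nat -> T -> nat) (f : nat -> R).
Hypothesis Jmeas : forall i n, measurable [set w | J i w = n].
Hypothesis Jdist : forall i n, P [set w | J i w = n] = (f n)%:E.
Hypothesis Jindep : iid_indep P J.

Definition ext k N (v : {ffun 'I_k -> 'I_N}) (i : nat) : nat :=
  if @insub _ (fun i => (i < k)%N) 'I_k i is Some j then nat_of_ord (v j) else 0%N.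

Lemma extE k N (v : {ffun 'I_k -> 'I_N}) (i : 'I_k) : ext v i = v i.
Proof. by rewrite /ext valK. Qed.

Definition Ev k N (t : nat) (v : {ffun 'I_k -> 'I_N}) : set T :=
  if (\sum_(i < k) (v i : nat) <= t)%N then
    \bigcap_(i in [set` iota 0 k]) [set w | J i w = ext v i]
  else set0.

Lemma Ev_meas k N t v : measurable (@Ev k N t v).
Proof.
rewrite /Ev; case: ifP => _; last exact: measurable0.
apply: fin_bigcap_measurable; last by move=> i _; apply: Jmeas.
by apply/finite_seqP; exists (iota 0 k).
Qed.

Lemma Sset k N t : (t < N)%N ->
  [set w | (psum J k w <= t)%N] = \bigcup_(v in [set: {ffun 'I_k -> 'I_N}]) Ev t v.
Proof.
move=> tN; apply/seteqP; split => w /=.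
- move=> Hw.
  have H : forall i : 'I_k, (J i w < N)%N.
    move=> i; apply: leq_ltn_trans tN; apply: leq_trans Hw.
    rewrite /psum (bigD1 i) //=; exact: leq_addr.
  exists [ffun i => Ordinal (H i)] => //.
  rewrite /Ev.
  have -> : (\sum_(i < k) ([ffun i => Ordinal (H i)] i : nat)) = psum J k w.
    by rewrite /psum; apply: eq_bigr => i _; rewrite ffunE.
  rewrite Hw => i /= /[!mem_iota] /= /[!add0n] ik.
  have -> : i = nat_of_ord (Ordinal ik) by [].
  by rewrite extE ffunE.
- case=> v _; rewrite /Ev; case: ifP => // Hs Hw.
  rewrite /psum; apply: leq_trans Hs; rewrite leq_eqVlt; apply/orP; left.
  apply/eqP; apply: eq_bigr => i _.
  have := Hw i; rewrite /= mem_iota add0n ltn_ord => /(_ isT).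
  by rewrite extE.
Qed.

Lemma Ev_triv k N t : trivIset [set: {ffun 'I_k -> 'I_N}] (@Ev k N t).
Proof.
move=> v v' _ _ [w []]; rewrite /Ev.
case: ifP => // _ Hv; case: ifP => // _ Hv'.
apply/ffunP => i; apply/val_inj.
have iI : [set` iota 0 k] (nat_of_ord i) by rewrite /= mem_iota add0n ltn_ord.
have := Hv _ iI; have := Hv' _ iI; rewrite /= !extE => <- ->//.
Qed.

Lemma probS k N t : (t < N)%N ->
  P [set w | (psum J k w <= t)%N] =
  (\sum_(v : {ffun 'I_k -> 'I_N} | (\sum_(i < k) (v i : nat) <= t)%N)
      \prod_(i < k) f (v i))%:E.
Proof.
move=> tN; rewrite (Sset k tN) measure_fin_bigcup //; last first.
- by move=> v _; apply: Ev_meas.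
- exact: Ev_triv.
- exact: finite_finset.
rewrite (fsbigE (enum {ffun 'I_k -> 'I_N})); first last.
- by move=> v _; rewrite mem_enum.
- by [].
- exact: enum_uniq.
rewrite (eq_bigl xpredT); last by move=> v; apply/mem_set.
rewrite big_enum /= -sumEFin [RHS]big_mkcond /=.
apply: eq_bigr => v _; rewrite /Ev.
case: ifP => _; last by rewrite measure0.
rewrite Jindep ?iota_uniq //.
rewrite (eq_bigr (fun i => (f (ext v i))%:E)); last by move=> i _; rewrite Jdist.
rewrite prodEFin; congr (_%:E).
rewrite (eq_bigr (fun i : 'I_k => f (ext v i))); last by move=> i _; rewrite extE.
by rewrite -(big_mkord xpredT (fun i => f (ext v i))) /index_iota subn0.
Qed.


Local Notation W := (Wf f).

Lemma S_meas k t : measurable [set w | (psum J k w <= t)%N].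
Proof.
rewrite (@Sset k t.+1 t) //; apply: fin_bigcup_measurable.
  exact: finite_finset.
by move=> v _; apply: Ev_meas.
Qed.

Lemma stateprobE k N t : (t < N)%N ->
  stateprob P J k (Posz t) = W k N t - W k.+1 N t.
Proof.
move=> tN; rewrite /stateprob.
have -> : [set w | (psum J k w <= t)%N /\ (t < psum J k.+1 w)%N] =
   [set w | (psum J k w <= t)%N] `\` [set w | (psum J k.+1 w <= t)%N].
  by apply/seteqP; split => w /=; rewrite ltnNge => -[-> /negP].
rewrite measureD; first last.
- by rewrite ltey_eq fin_num_measure //; apply: S_meas.
- by apply: S_meas.
- by apply: S_meas.
rewrite setIidr; last first.
  move=> w /= H; apply: leq_trans H.
  by rewrite /psum big_ord_recr /= leq_addr.
rewrite (_ : W k N t - W k.+1 N t = fine ((W k N t)%:E - (W k.+1 N t)%:E)) //.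
by congr (fine (_ - _)); apply: probS.
Qed.

End ProbPart.

Unset Implicit Arguments.

Theorem mainTheorem8 (R : realType) (p a : R)
  (hp : 0 < p < 1) (ha : 0 < a < 1)
  (d : measure_display) (T : measurableType d) (P : probability T R)
  (J : nat -> T -> nat)
  (Jmeas : forall i n, measurable [set w | J i w = n])
  (Jdist : forall i n, P [set w | J i w = n] = (mlB_pmf p a n)%:E)
  (Jindep : iid_indep P J) :
  let q := 1 - p in
  let lam := p / q in
  let pk := stateprob P J in
  (forall k : nat, pk k 0 = (k == 0%N)%:R) /\
  (forall (k : nat) (t : nat), (1 <= k)%N ->
     fracdiff a (pk k) t%:Z = - lam * pk k t%:Z + lam * pk k.-1 (t%:Z - 1)) /\
  (forall t : nat,
     fracdiff a (pk 0%N) t%:Z - (-1) ^+ t * gbinom (a - 1) t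
       = - lam * pk 0%N t%:Z + lam * (t == 0%N)%:R).
Proof.
move=> q lam pk.
pose f := mlB_pmf p a.
have SP : forall k N t, (t < N)%N ->
    stateprob P J k (Posz t) = Wf f k N t - Wf f k.+1 N t.
  by move=> k N t tN; apply: (stateprobE Jmeas Jdist Jindep k tN).
have EP : forall k N, eqN N (tr N (fun i : nat => pk k i%:Z))
                           (U N * ((tr N f) ^+ k - (tr N f) ^+ k.+1)).
  by move=> k N i iN; rewrite coef_tr // /pk (SP k N i iN) !W_coef // mulrBr coefB.
have FD : forall (g : int -> R) t, (forall n, g (Negz n) = 0) ->
    fracdiff a g t%:Z = (Apol a t.+1 * tr t.+1 (fun i : nat => g i%:Z))`_t.
  move=> g t Hg; rewrite /fracdiff (limn_trunc (K := t.+1)); last first.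
    move=> j tj.
    have -> : t%:Z - j%:Z = Negz (j - t.+1) by rewrite NegzE; lia.
    by rewrite Hg mulr0.
  rewrite coefM; apply: eq_bigr => j _.
  have jt : (j <= t)%N by rewrite -ltnS.
  rewrite /Apol !coef_tr //; last by rewrite ltnS leq_subr.
  by rewrite subzn // /aa.
have pkN : forall k n, pk k (Negz n) = 0 by [].
split.
  move=> k; rewrite /pk (SP k 1 0 isT) !W_coef // !coef0M !coef0X /U !coef_tr //.
  have -> : f 0 = 0 by [].
  by rewrite !expr0n /=; case: k => [|k] /=; rewrite ?mulr1 ?mulr0 ?subr0.
split.
  case=> [//|k] t _.
  rewrite (FD _ t (pkN _)).
  pose N := t.+1; pose F := tr N f; pose A := Apol a N.
  have H : eqN N ((A + lam%:P) * tr N (fun i : nat => pk k.+1 i%:Z))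
                 (lam%:P * 'X * tr N (fun i : nat => pk k i%:Z)).
    eapply eqN_trans; first exact: (eqN_mul (@eqN_refl _ N _) (EP _ _)).
    have -> : (A + lam%:P) * (U N * (tr N f ^+ k.+1 - tr N f ^+ k.+2)) =
       ((A + lam%:P) * F) * (U N * (F ^+ k - F ^+ k.+1)).
      by rewrite /F !exprS; ring.
    eapply eqN_trans; first exact: (eqN_mul (@key _ p a hp N) (@eqN_refl _ N _)).
    exact: (eqN_mul (@eqN_refl _ N _) (eqN_sym (EP _ _))).
  have := H t (ltnSn t).
  rewrite mulrDl coefD coefCM -mulrA coefCM coefXM coef_tr //.
  rewrite /A /F /N; clear H A F N; case: t => [|t].
    rewrite eqxx mulr0 => E; rewrite addr0 mulNr.
    by apply/eqP; rewrite -addr_eq0 E.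
  rewrite [t.+1 == 0%N]/= succnK coef_tr //.
  have -> : (t.+1)%:Z - 1 = t%:Z by rewrite -addn1 PoszD addrK.
  by move=> E; rewrite -E; ring.
move=> t; rewrite (FD _ t (pkN _)).
pose N := t.+1; pose F := tr N f; pose A := Apol a N.
have K0 : eqN N ((A + lam%:P) * F - lam%:P * 'X) 0.
  by move=> i iN; rewrite coefB (@key _ p a hp N i iN) subrr coef0.
have H : eqN N ((A + lam%:P) * tr N (fun i : nat => pk 0%N i%:Z))
               (U N * A + lam%:P * 1 - U N * 0).
  eapply eqN_trans; first exact: (eqN_mul (@eqN_refl _ N _) (EP _ _)).
  have -> : (A + lam%:P) * (U N * (tr N f ^+ 0 - tr N f ^+ 1)) =
     U N * A + lam%:P * (U N * (1 - 'X)) - U N * ((A + lam%:P) * F - lam%:P * 'X).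
    by rewrite /F expr0 expr1; ring.
  exact: (eqN_sub (eqN_add (@eqN_refl _ N _) (eqN_mul (@eqN_refl _ N _) (@eqN_UX _ N))) (eqN_mul (@eqN_refl _ N _) K0)).
have := H t (ltnSn t).
rewrite mulr0 subr0 mulr1 mulrDl coefD coefCM coefD coefC coef_tr // [U N * A]mulrC (coefM A (U N) t).
rewrite (eq_bigr (fun j : 'I_t.+1 => aa a j)); last first.
  move=> j _; rewrite /A /Apol /U !coef_tr ?mulr1 //.
  by rewrite ltnS leq_subr.
rewrite sum_aa => E.
rewrite (_ : (if t == 0%N then lam else 0) = lam * (t == 0%N)%:R) in E; last first.
  by case: (t == 0%N); rewrite ?mulr1 ?mulr0.
rewrite /A /N in E.
have E' : (Apol a t.+1 * tr t.+1 (fun i : nat => pk 0%N i))`_t =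
   (-1) ^+ t * gbinom (a - 1) t + lam * (t == 0%N)%:R - lam * pk 0%N t.
  by rewrite -E addrK.
rewrite E'; ring.
Qed.
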